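(* Let $R\ge 1$, let $\mathbf{x}=(x_1,\dots,x_R)$ be a vector of pairwise distinct reals and $\mathbf{c}\in\mathbb{R}^R$. If $R$ is odd, then $\det B(\mathbf{x},\mathbf{c})=0$. If $R=2T$ is even, then $$\det B(\mathbf{x},\mathbf{c})=\prod_{k=1}^R c_k^2\sum_{(m_i,n_i)_{i=1}^T\in E}\ \prod_{i=1}^T a_{m_i,n_i}^2=\sum_{(m_i,n_i)_{i=1}^T\in E}\ \prod_{i=1}^T b_{m_i,n_i}^2,$$ where $E$ is the set of families $(m_i,n_i)_{i=1}^T$ of integer pairs such that $\bigcup_{i=1}^T\{m_i,n_i\}=\{1,\dots,R\}$, $m_i<n_i$ for all $i$, and $m_1<m_2<\dots<m_T$ (i.e. $E$ indexes the perfect matchings of $\{1,\dots,R\}$).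
   Context: For pairwise distinct reals $x_1,\dots,x_R$, $a_{m,n}=a_{m,n}(\mathbf{x})=0$ if $m=n$ and $a_{m,n}=\frac{1}{x_m-x_n}$ if $m\ne n$. For $\mathbf{c}=(c_1,\dots,c_R)\in\mathbb{R}^R$, $B(\mathbf{x},\mathbf{c})$ is the $R\times R$ matrix with entries $b_{m,n}=c_mc_na_{m,n}$ (so $b_{m,m}=0$ and $b_{m,n}=\frac{c_mc_n}{x_m-x_n}$ for $m\ne n$). *)

(* Defs.v *)
From HB Require Import structures.
From mathcomp Require Import all_boot all_order all_algebra.
Set Implicit Arguments. Unset Strict Implicit. Unset Printing Implicit Defensive.
Import Order.TTheory GRing.Theory Num.Theory.
Local Open Scope ring_scope.

(* a_{m,n} = 0 if m = n, 1/(x_m - x_n) otherwise. Indices are 0-based ('I_R). *)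
Definition amat (F : realFieldType) (R : nat) (x : 'I_R -> F) : 'M[F]_R :=
  \matrix_(m < R, n < R) (if m == n then 0 else (x m - x n)^-1).

Definition Bmat (F : realFieldType) (R : nat) (x c : 'I_R -> F) : 'M[F]_R :=
  \matrix_(m < R, n < R) (c m * c n * amat x m n).

Definition in_E (T R : nat) (p : {ffun 'I_T -> 'I_R * 'I_R}) : bool :=
  [&& [forall i, ((p i).1 < (p i).2)%N],
      [forall i : 'I_T, forall j : 'I_T, ((i < j)%N ==> ((p i).1 < (p j).1)%N)] &
      [forall k : 'I_R, exists i, (k == (p i).1) || (k == (p i).2)]].

(* Main.v *)
Require Import Defs.
From HB Require Import structures.
From mathcomp Require Import all_boot all_order all_algebra all_fingroup.
From mathcomp Require Import ring lra zify.
Set Implicit Arguments. Unset Strict Implicit. Unset Printing Implicit Defensive.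
Import Order.TTheory GRing.Theory Num.Theory.
Local Open Scope ring_scope.

Lemma perm_on_fix (T : finType) (S : {set T}) n (t : {perm T}) :
  perm_on (S :\ n) t = perm_on S t && (t n == n).
Proof.
apply/idP/andP.
  move=> h; split; first by apply: subset_trans h (subsetDl _ _).
  apply/negPn/negP => tn; move/subsetP: h => /(_ n); rewrite inE tn => /(_ isT).
  by rewrite !inE eqxx.
case=> /subsetP h tn; apply/subsetP => y; rewrite inE => ty.
rewrite !inE (h y) ?andbT ?inE //.
by apply/eqP => e; subst y; rewrite tn in ty.
Qed.

Lemma perm_split (T : finType) (F : comNzRingType) (S : {set T}) n (f : {perm T} -> F) :
  n \in S ->
  \sum_(s | perm_on S s) f s = \sum_(i in S) \sum_(t | perm_on (S :\ n) t) f (tperm i n * t)%g.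
Proof.
move=> nS.
rewrite (partition_big (fun s : {perm T} => (s^-1)%g n) (mem S)) /=; last first.
  by move=> s sS; rewrite perm_closed ?perm_onV.
apply: eq_bigr => i iS.
rewrite (reindex_inj (mulgI (tperm i n))) /=.
apply: eq_bigl => t.
have tpS : perm_on S (tperm i n).
  by apply: subset_trans (tperm_on _ _) _; apply/subsetP => y; rewrite !inE => /orP[]/eqP->.
have e1 : perm_on S (tperm i n * t)%g = perm_on S t.
  apply/idP/idP => h; last by apply: perm_onM.
  by rewrite -(mulKg (tperm i n) t) tpermV; apply: perm_onM.
rewrite e1 perm_on_fix; congr (_ && _).
rewrite invMg permM tpermV.
apply/eqP/eqP => h.
  have : tperm i n (tperm i n ((t^-1)%g n)) = tperm i n i by rewrite h.
  rewrite tpermK tpermL => h2.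
  by rewrite -{1}h2 permKV.
have -> : (t^-1)%g n = n by rewrite -{1}h permK.
by rewrite tpermR.
Qed.

Definition aa (F : fieldType) (T : finType) (x : T -> F) (i j : T) : F :=
  if i == j then 0 else (x i - x j)^-1.
Definition bb (F : fieldType) (T : finType) (x c : T -> F) (i j : T) : F :=
  c i * c j * aa x i j.
Definition Dd (F : comNzRingType) (T : finType) (M : T -> T -> F) (S : {set T}) : F :=
  \sum_(s : {perm T} | perm_on S s) (-1) ^+ s * \prod_(k in S) M k (s k).

Lemma aaN (F : fieldType) (T : finType) (x : T -> F) i j : aa x i j = - aa x j i.
Proof.
rewrite /aa eq_sym; case: eqP => _; first by rewrite oppr0.
by rewrite -invrN opprB.
Qed.

Lemma bbN (F : fieldType) (T : finType) (x c : T -> F) i j : bb x c i j = - bb x c j i.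
Proof. by rewrite /bb aaN mulrN (mulrC (c i)). Qed.

Lemma bb_diag (F : fieldType) (T : finType) (x c : T -> F) i : bb x c i i = 0.
Proof. by rewrite /bb /aa eqxx mulr0. Qed.

Lemma key_id (F : fieldType) (T : finType) (x c : T -> F) (i j n : T) :
  injective x -> i != n -> j != n ->
  bb x c n j * bb x c i n =
  (if j == i then bb x c n i * bb x c i n else 0)
  + c n ^+ 2 * bb x c i j * (aa x i n - aa x j n).
Proof.
move=> xi hin hjn.
case: eqP => [->|/eqP hji]; first by rewrite bb_diag mulr0 mul0r addr0.
have hni : n != i by rewrite eq_sym.
have hnj : n != j by rewrite eq_sym.
have hij : i != j by rewrite eq_sym.
rewrite add0r /bb /aa !ifN //.
have d1 : x i - x n != 0 by rewrite subr_eq0 (inj_eq xi).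
have d2 : x n - x j != 0 by rewrite subr_eq0 (inj_eq xi) eq_sym.
have d3 : x i - x j != 0 by rewrite subr_eq0 (inj_eq xi) eq_sym.
have d4 : x j - x n != 0 by rewrite subr_eq0 (inj_eq xi).
field.
by rewrite ?d1 ?d2 ?d3 ?d4.
Qed.

Lemma Drec (F : fieldType) (T : finType) (x c : T -> F) (S : {set T}) n :
  injective x -> n \in S ->
  Dd (bb x c) S = \sum_(i in S :\ n) bb x c n i ^+ 2 * Dd (bb x c) (S :\ n :\ i).
Proof.
move=> xi nS.
rewrite /Dd (perm_split _ nS) (bigD1 n nS) /=.
rewrite [X in X + _]big1 ?add0r; last first.
  move=> t tS; rewrite tperm1 mul1g (bigD1 n nS) /= (out_perm tS) ?bb_diag ?mul0r ?mulr0 //.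
  by rewrite !inE eqxx.
set S' := S :\ n.
rewrite (eq_bigl (fun i => i \in S')); last by move=> i; rewrite !inE andbC.
have step : forall i, i \in S' -> forall t : {perm T}, perm_on S' t ->
   (-1) ^+ (tperm i n * t)%g * \prod_(k in S) bb x c k ((tperm i n * t)%g k)
   = - (-1) ^+ t * (bb x c n (t i) * bb x c i n * \prod_(k in S' :\ i) bb x c k (t k)).
  move=> i iS' t tS.
  have hin : i != n by move: iS'; rewrite !inE => /andP[].
  have tn : t n = n by rewrite (out_perm tS) // !inE eqxx.
  rewrite odd_mul_tperm hin /= signrN !mulNr; congr (- (_ * _)).
  rewrite (big_setD1 n nS) (big_setD1 i iS') /= !permM tpermR tpermL tn mulrA.
  congr (_ * _); apply: eq_bigr => k; rewrite !inE => /and3P[hki hkn _].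
  by rewrite permM tpermD // eq_sym.
rewrite (eq_bigr (fun i => \sum_(t | perm_on S' t) - (-1) ^+ t * (bb x c n (t i) * bb x c i n * \prod_(k in S' :\ i) bb x c k (t k)))); last first.
  by move=> i iS'; apply: eq_bigr => t tS; apply: step.
rewrite [RHS](eq_bigr (fun i => \sum_(t | perm_on S' t) bb x c n i ^+ 2 *
    (if t i == i then (-1) ^+ t * \prod_(k in S' :\ i) bb x c k (t k) else 0))); last first.
  move=> i iS'; rewrite big_distrr /= big_mkcond [RHS]big_mkcond /=.
  apply: eq_bigr => t _; rewrite perm_on_fix.
  by case: (perm_on S' t); case: (t i == i); rewrite /= ?mulr0.
rewrite [LHS]exchange_big [RHS]exchange_big /=.
apply: eq_bigr => t tS.
set sg := (-1) ^+ _; clearbody sg.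
have tS' : forall i, (t i \in S') = (i \in S') by move=> i; rewrite perm_closed.
have ne : forall i, i \in S' -> i != n by move=> i; rewrite !inE => /andP[].
rewrite (eq_bigr (fun i => - sg * ((if t i == i then bb x c n i * bb x c i n else 0) *
   \prod_(k in S' :\ i) bb x c k (t k)) + (- sg * c n ^+ 2 * \prod_(k in S') bb x c k (t k)) * (aa x i n - aa x (t i) n))); last first.
  move=> i iS'; rewrite (key_id c xi (ne _ iS')) ?ne ?tS' // (big_setD1 i iS') /=.
  move: (\prod_(k in S' :\ i) bb x c k (t k)) (if _ then _ else _) => P I.
  ring.
rewrite big_split /= [X in _ + X](_ : _ = 0) ?addr0; last first.
  rewrite -big_distrr /= sumrB.
  rewrite [X in X - _](reindex_inj (@perm_inj _ t)) /=.
  rewrite [X in X - _](eq_bigl (fun i => i \in S')); last by move=> i; rewrite tS'.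
  by rewrite subrr mulr0.
apply: eq_bigr => i iS'.
case: eqP => _; last by rewrite !mul0r !mulr0.
rewrite (bbN x c i n); move: (\prod_(k in S' :\ i) bb x c k (t k)) => P; ring.
Qed.

Definition inES (T R : nat) (S : {set 'I_R}) (p : {ffun 'I_T -> 'I_R * 'I_R}) : bool :=
  [&& [forall i, ((p i).1 < (p i).2)%N],
      [forall i : 'I_T, forall j : 'I_T, ((i < j)%N ==> ((p i).1 < (p j).1)%N)] &
      [forall k : 'I_R, (k \in S) == [exists i, (k == (p i).1) || (k == (p i).2)]]].

Definition ES (F : comNzRingType) (T R : nat) (S : {set 'I_R}) (w : 'I_R -> 'I_R -> F) : F :=
  \sum_(p : {ffun 'I_T -> 'I_R * 'I_R} | inES S p) \prod_(i < T) w (p i).1 (p i).2.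

Lemma inESP (T R : nat) (S : {set 'I_R}) (p : {ffun 'I_T -> 'I_R * 'I_R}) :
  reflect [/\ forall i, ((p i).1 < (p i).2)%N,
              forall i j : 'I_T, (i < j)%N -> ((p i).1 < (p j).1)%N &
              forall k, (k \in S) = [exists i, (k == (p i).1) || (k == (p i).2)]]
          (inES S p).
Proof.
apply: (iffP and3P) => [[/forallP h1 /forallP h2 /forallP h3]|[h1 h2 h3]]; split.
- exact: h1.
- by move=> i j; move: (h2 i) => /forallP /(_ j) /implyP.
- by move=> k; apply/eqP; apply: h3.
- by apply/forallP.
- by apply/forallP => i; apply/forallP => j; apply/implyP; apply: h2.
- by apply/forallP => k; rewrite h3.
Qed.

Lemma inES_mem (T R : nat) (S : {set 'I_R}) (p : {ffun 'I_T -> 'I_R * 'I_R}) j :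
  inES S p -> ((p j).1 \in S) && ((p j).2 \in S).
Proof.
by case/inESP => _ _ h3; rewrite !h3; apply/andP; split; apply/existsP; exists j; rewrite eqxx ?orbT.
Qed.

Lemma cov_inj (T R : nat) (S : {set 'I_R}) (p : {ffun 'I_T -> 'I_R * 'I_R}) :
  inES S p -> #|S| = (2 * T)%N ->
  injective (fun ib : 'I_T * bool => if ib.2 then (p ib.1).1 else (p ib.1).2).
Proof.
move=> H cS.
set f := (fun ib : 'I_T * bool => if ib.2 then (p ib.1).1 else (p ib.1).2).
have im : f @: setT = S.
  apply/setP => k; apply/imsetP/idP.
    case=> [[j b]] _ ->; have := inES_mem j H; rewrite /f /=.
    by case: b => /andP[].
  case/inESP: H => _ _ h3; rewrite h3 => /existsP[j /orP[]/eqP ->].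
    by exists (j, true).
  by exists (j, false).
have : #|f @: setT| == #|[set: 'I_T * bool]|.
  by rewrite im cardsT card_prod card_ord card_bool cS mulnC.
move/imset_injP => inj a b e; apply: inj; rewrite ?inE //.
Qed.

Definition ext (T R : nat) (n i : 'I_R) (q : {ffun 'I_T -> 'I_R * 'I_R}) :
  {ffun 'I_T.+1 -> 'I_R * 'I_R} :=
  [ffun j => if unlift ord0 j is Some j' then q j' else (n, i)].

Lemma ext0 (T R : nat) (n i : 'I_R) (q : {ffun 'I_T -> 'I_R * 'I_R}) : ext n i q ord0 = (n, i).
Proof. by rewrite /ext ffunE unlift_none. Qed.

Lemma extS (T R : nat) (n i : 'I_R) (q : {ffun 'I_T -> 'I_R * 'I_R}) j :
  ext n i q (lift ord0 j) = q j.
Proof. by rewrite /ext ffunE liftK. Qed.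

Lemma inES_ext (T R : nat) (S : {set 'I_R}) n i (q : {ffun 'I_T -> 'I_R * 'I_R}) :
  #|S| = (2 * T.+1)%N -> n \in S -> (forall k, k \in S -> (n <= k)%N) -> i \in S :\ n ->
  inES S (ext n i q) = inES (S :\ n :\ i) q.
Proof.
move=> cS nS nmin iS.
have [hin iS0] : i != n /\ i \in S by move: iS; rewrite !inE => /andP[].
have nlti : (n < i)%N by rewrite ltn_neqAle (nmin _ iS0) andbT eq_sym val_eqE hin.
apply/idP/idP.
- move=> H; have H' := H; case/inESP: H' => h1 h2 h3.
  have hinj := cov_inj H cS.
  apply/inESP; split.
  + by move=> j; have := h1 (lift ord0 j); rewrite extS.
  + by move=> j1 j2 lt; have := h2 (lift ord0 j1) (lift ord0 j2); rewrite !extS !lift0; apply.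
  + move=> k; rewrite !inE; apply/idP/idP.
      case/and3P => hki hkn; rewrite h3 => /existsP[j].
      case: (unliftP ord0 j) => [j'|] -> ; rewrite ?extS ?ext0 /=.
        by move=> hc; apply/existsP; exists j'.
      by rewrite (negbTE hki) (negbTE hkn).
    case/existsP => j hc.
    have kS : k \in S by rewrite h3; apply/existsP; exists (lift ord0 j); rewrite extS.
    have lt0 : (n < (q j).1)%N.
      by have := h2 ord0 (lift ord0 j); rewrite extS ext0 lift0 /=; apply.
    have kn : k != n.
      apply/negP => /eqP e; subst k; move: hc => /orP[] /eqP e.
        by rewrite -e ltnn in lt0.
      by have := h1 (lift ord0 j); rewrite extS -e => /(ltn_trans lt0); rewrite ltnn.
    rewrite kn kS andbT /= andbT.
    apply/negP => /eqP e; subst k.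
    move: hc => /orP[] /eqP e.
      have := hinj (lift ord0 j, true) (ord0, false); rewrite /= extS ext0 /= => /(_ (esym e)).
      by case.
    have := hinj (lift ord0 j, false) (ord0, false); rewrite /= extS ext0 /= => /(_ (esym e)).
    by move=> h; have := congr1 (fun p => val p.1) h.
- move=> H; case/inESP: H => h1 h2 h3.
  have gt : forall k, k \in S :\ n :\ i -> (n < k)%N /\ k \in S.
    move=> k; rewrite !inE => /and3P[_ hkn kS]; split => //.
    by rewrite ltn_neqAle (nmin _ kS) andbT eq_sym val_eqE hkn.
  apply/inESP; split.
  + by move=> j; case: (unliftP ord0 j) => [j'|] ->; rewrite ?extS ?ext0.
  + move=> j1 j2; case: (unliftP ord0 j1) => [j1'|] ->; case: (unliftP ord0 j2) => [j2'|] ->;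
      rewrite ?extS ?ext0 ?lift0 //=.
    * by rewrite ltnS; apply: h2.
    * by move=> _; case: (gt _ (proj1 (andP (inES_mem j2' (introT (inESP _ _) (And3 h1 h2 h3)))))).
  + move=> k; apply/idP/idP.
      move=> kS; case: (eqVneq k n) => [->|hkn].
        by apply/existsP; exists ord0; rewrite ext0 eqxx.
      case: (eqVneq k i) => [->|hki].
        by apply/existsP; exists ord0; rewrite ext0 eqxx orbT.
      have : k \in S :\ n :\ i by rewrite !inE hki hkn kS.
      rewrite h3 => /existsP[j' hc]; apply/existsP; exists (lift ord0 j'); rewrite extS.
      exact: hc.
    case/existsP => j; case: (unliftP ord0 j) => [j'|] ->; rewrite ?extS ?ext0 /=.
      by move=> hc; apply: (proj2 (gt _ _)); rewrite h3; apply/existsP; exists j'.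
    by case/orP => /eqP ->.
Qed.

Lemma p0n (T R : nat) (S : {set 'I_R}) n (p : {ffun 'I_T.+1 -> 'I_R * 'I_R}) :
  inES S p -> n \in S -> (forall k, k \in S -> (n <= k)%N) -> (p ord0).1 = n.
Proof.
move=> H nS nmin; have H' := H; case/inESP: H' => h1 h2 h3.
apply/val_inj/eqP; rewrite eqn_leq; apply/andP; split; last first.
  by apply: nmin; case/andP: (inES_mem ord0 H).
have le0 : forall j, ((p ord0).1 <= (p j).1)%N.
  move=> j; case: (unliftP ord0 j) => [j'|] ->; last by [].
  by apply: ltnW; apply: h2; rewrite lift0.
move: nS; rewrite h3 => /existsP[j /orP[]/eqP ->]; first exact: le0.
by apply: ltnW; apply: leq_ltn_trans (le0 j) (h1 j).
Qed.

Lemma ESrec (F : comNzRingType) (T R : nat) (S : {set 'I_R}) n (w : 'I_R -> 'I_R -> F) :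
  #|S| = (2 * T.+1)%N -> n \in S -> (forall k, k \in S -> (n <= k)%N) ->
  ES T.+1 S w = \sum_(i in S :\ n) w n i * ES T (S :\ n :\ i) w.
Proof.
move=> cS nS nmin.
rewrite /ES (partition_big (fun p : {ffun 'I_T.+1 -> 'I_R * 'I_R} => (p ord0).2) (mem (S :\ n))) /=; last first.
  move=> p H; case/andP: (inES_mem ord0 H) => m1 m2.
  rewrite !inE m2 andbT; apply/negP => /eqP e.
  have e2 := p0n H nS nmin; case/inESP: H => h1 _ _; have := h1 ord0; rewrite e e2 ltnn.
  done.
apply: eq_bigr => i iS.
rewrite big_distrr /=.
rewrite (reindex (ext n i)) /=; last first.
  exists (fun p : {ffun 'I_T.+1 -> 'I_R * 'I_R} => [ffun j => p (lift ord0 j)]) => [q _|p].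
    by apply/ffunP => j; rewrite ffunE extS.
  rewrite inE => /andP[H /eqP e]; apply/ffunP => j; case: (unliftP ord0 j) => [j'|] ->.
    by rewrite extS ffunE.
  by rewrite ext0 -(p0n H nS nmin) -e; case: (p ord0).
apply: eq_big => q; first by rewrite ext0 eqxx andbT inES_ext.
by move=> _; rewrite big_ord_recl ext0 /=; congr (_ * _); apply: eq_bigr => j _; rewrite extS.
Qed.

Lemma DE (F : fieldType) (R : nat) (x c : 'I_R -> F) (T : nat) (S : {set 'I_R}) :
  injective x -> #|S| = (2 * T)%N ->
  Dd (bb x c) S = ES T S (fun i j => bb x c i j ^+ 2).
Proof.
move=> xi; elim: T S => [|T IH] S cS.
  have -> : S = set0 by apply/eqP; rewrite -cards_eq0 cS.
  rewrite /Dd (big_pred1 1%g); last first.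
    move=> s; apply/idP/eqP => [h|->]; last exact: perm_on1.
    by apply: perm_on_id h _; rewrite cards0.
  rewrite odd_perm1 big_set0 mulr1 /ES.
  rewrite (eq_bigr (fun _ => 1)); last by move=> p _; rewrite big_ord0.
  rewrite (eq_bigl (fun p => p \in [set: {ffun 'I_0 -> 'I_R * 'I_R}])); last first.
    move=> p; rewrite inE; apply/inESP; split => //; try by case.
    by move=> k; rewrite in_set0; apply/esym/existsP => -[[]].
  by rewrite sumr_const cardsT card_ffun card_ord expn0 expr0.
have [k0 k0S] : exists k0, k0 \in S.
  by apply/set0Pn; rewrite -cards_eq0 cS mulnS.
case: (arg_minnP (fun k : 'I_R => val k) k0S) => n nS0 nmin.
have nS : n \in S by [].
have nmin' : forall k, k \in S -> (n <= k)%N by [].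

rewrite (Drec c xi nS) (ESrec _ cS nS nmin').
apply: eq_bigr => i iS; rewrite IH //.
move: cS; rewrite (cardsD1 n) nS (cardsD1 i (S :\ n)) iS mulnS.
by case.
Qed.

Lemma prod_setT (T : finType) (G : comNzRingType) (f : T -> G) :
  \prod_(k in [set: T]) f k = \prod_k f k.
Proof. by apply: eq_bigl => k; rewrite in_setT. Qed.

Lemma detD (F : realFieldType) (R : nat) (x c : 'I_R -> F) :
  \det (Bmat x c) = Dd (bb x c) setT.
Proof.
rewrite /determinant /Dd; apply: eq_big => s; first by apply/esym/subsetP => y; rewrite in_setT.
by move=> _; rewrite prod_setT; congr (_ * _); apply: eq_bigr => i _; rewrite !mxE.
Qed.

Lemma Dd_c (F : fieldType) (T : finType) (x c : T -> F) :
  Dd (bb x c) setT = (\prod_(k in setT) c k) ^+ 2 * Dd (bb x (fun _ => 1)) setT.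
Proof.
rewrite /Dd mulr_sumr; apply: eq_bigr => s _.
rewrite mulrCA; congr (_ * _).
rewrite /bb !big_split /= expr2 !big1_eq !mul1r; congr (_ * _ * _).
apply/esym; rewrite (reindex_inj (@perm_inj _ s)) /=.
by apply: eq_bigl => k; rewrite !inE.
Qed.

Lemma inE_ES (T R : nat) (p : {ffun 'I_T -> 'I_R * 'I_R}) : in_E p = inES setT p.
Proof.
rewrite /in_E /inES; congr (_ && (_ && _)); apply: eq_forallb => k.
by rewrite in_setT; case: [exists _, _].
Qed.

Theorem theorem2 (F : realFieldType) (R : nat) (x c : 'I_R -> F) :
  (1 <= R)%N -> injective x ->
  (odd R -> \det (Bmat x c) = 0) /\
  (forall T : nat, R = (2 * T)%N ->
     \det (Bmat x c) =
       (\prod_(k < R) c k ^+ 2) *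
       \sum_(p : {ffun 'I_T -> 'I_R * 'I_R} | in_E p)
          \prod_(i < T) amat x (p i).1 (p i).2 ^+ 2
     /\
     \det (Bmat x c) =
       \sum_(p : {ffun 'I_T -> 'I_R * 'I_R} | in_E p)
          \prod_(i < T) Bmat x c (p i).1 (p i).2 ^+ 2).
Proof.
move=> _ xi; split.
  move=> oR.
  have h : \det (Bmat x c) = - \det (Bmat x c).
    have e : (Bmat x c)^T = - Bmat x c.
      by apply/matrixP => i j; rewrite !mxE -!/(bb x c _ _) bbN.
    by rewrite -{1}det_tr e -scaleN1r detZ -signr_odd oR expr1 mulN1r.
  lra.
move=> T RT.
have cT : #|[set: 'I_R]| = (2 * T)%N by rewrite cardsT card_ord.
split.
  rewrite detD Dd_c (DE _ xi cT) prod_setT prodrXl; congr (_ * _).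
  rewrite /ES; apply: eq_big => p; first by rewrite inE_ES.
  by move=> _; apply: eq_bigr => i _; rewrite /bb !mul1r /amat mxE.
rewrite detD (DE _ xi cT) /ES; apply: eq_big => p; first by rewrite inE_ES.
by move=> _; apply: eq_bigr => i _; rewrite /Bmat /bb /amat !mxE.
Qed.
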